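(* The variety generated by the quasivariety of Bochvar algebras (equivalently, the variety generated by $\mathbf{WK}^e$) is axiomatised by the following identities, in the type $\langle\wedge,\vee,\neg,J_2,0,1\rangle$: (K1) $x\vee x\approx x$; (K2) $x\vee y\approx y\vee x$; (K3) $x\vee(y\vee z)\approx(x\vee y)\vee z$; (K4) $\neg\neg x\approx x$; (K5) $x\wedge y\approx\neg(\neg x\vee\neg y)$; (K6) $x\wedge(\neg x\vee y)\approx x\wedge y$; (K7) $0\vee x\approx x$; (K8) $1\approx\neg 0$; (K9) $J_2x\vee\neg J_2x\approx 1$; (K10) $x\vee J_2y\approx x\vee J_2(x\vee y)$; (K11) $x\wedge J_2x\approx x$; (K12) $J_2(x\wedge\neg x)\approx 0$.
   Context: $\mathbf{WK}^e$ is the three-element algebra on $\{0,\tfrac12,1\}$ of type $\langle\wedge,\vee,\neg,J_2,0,1\rangle$ (arities $2,2,1,1,0,0$). Its operations are: - $\neg$ swaps $0$ and $1$ and fixes $\tfrac12$; - $\wedge,\vee$ are the Boolean operations on $\{0,1\}$ and return $\tfrac12$ whenever some argument is $\tfrac12$; - $J_2(1)=1$ and $J_2(\tfrac12)=J_2(0)=0$. The quasivariety of Bochvar algebras is $\mathsf{BCA}=ISP(\mathbf{WK}^e)$. *)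

(* Defs.v *)
From Stdlib Require Import List.
Import ListNotations.

Inductive term : Type :=
| Var : nat -> term
| Meet : term -> term -> term
| Join : term -> term -> term
| Neg : term -> term
| J2t : term -> term
| Zero : term
| One : term.

Record algebra : Type := Algebra {
  carrier :> Type;
  a_meet : carrier -> carrier -> carrier;
  a_join : carrier -> carrier -> carrier;
  a_neg : carrier -> carrier;
  a_J2 : carrier -> carrier;
  a_zero : carrier;
  a_one : carrier }.

Fixpoint eval (A : algebra) (v : nat -> carrier A) (t : term) : carrier A :=
  match t with
  | Var n => v n
  | Meet s u => a_meet A (eval A v s) (eval A v u)
  | Join s u => a_join A (eval A v s) (eval A v u)
  | Neg s => a_neg A (eval A v s)
  | J2t s => a_J2 A (eval A v s)
  | Zero => a_zero A
  | One => a_one A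
  end.

Definition holds (A : algebra) (s t : term) : Prop :=
  forall v : nat -> carrier A, eval A v s = eval A v t.

Inductive wk : Type := W0 | Whalf | W1.

Definition wk_neg (a : wk) : wk :=
  match a with W0 => W1 | Whalf => Whalf | W1 => W0 end.

Definition wk_join (a b : wk) : wk :=
  match a, b with
  | Whalf, _ | _, Whalf => Whalf
  | W0, W0 => W0
  | _, _ => W1
  end.

Definition wk_meet (a b : wk) : wk :=
  match a, b with
  | Whalf, _ | _, Whalf => Whalf
  | W1, W1 => W1
  | _, _ => W0
  end.

Definition wk_J2 (a : wk) : wk :=
  match a with W1 => W1 | _ => W0 end.

Definition WKe : algebra := Algebra wk wk_meet wk_join wk_neg wk_J2 W0 W1.

Definition vx := Var 0.
Definition vy := Var 1.
Definition vz := Var 2.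

Definition K_axioms : list (term * term) := [
  (Join vx vx, vx);
  (Join vx vy, Join vy vx);
  (Join vx (Join vy vz), Join (Join vx vy) vz);
  (Neg (Neg vx), vx);
  (Meet vx vy, Neg (Join (Neg vx) (Neg vy)));
  (Meet vx (Join (Neg vx) vy), Meet vx vy);
  (Join Zero vx, vx);
  (One, Neg Zero);
  (Join (J2t vx) (Neg (J2t vx)), One);
  (Join vx (J2t vy), Join vx (J2t (Join vx vy)));
  (Meet vx (J2t vx), vx);
  (J2t (Meet vx (Neg vx)), Zero)
].

Definition models_K (A : algebra) : Prop :=
  forall e, In e K_axioms -> holds A (fst e) (snd e).

(* A satisfies every identity valid in WK^e, i.e. A belongs to the variety
   generated by WK^e (Birkhoff: V(K) = Mod(Id(K))). *)
Definition in_variety_WKe (A : algebra) : Prop :=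
  forall s t : term, holds WKe s t -> holds A s t.

(* Main.v *)
Require Import Defs.
From Stdlib Require Import List Arith Bool.
Import ListNotations.


Inductive bf : Type :=
| BA (x : nat) (s : bool) | BT | BF | BN (f : bf) | BAnd (f g : bf) | BOr (f g : bf).

Fixpoint bev (w : nat -> bool -> bool) (f : bf) : bool :=
  match f with
  | BA x s => w x s | BT => true | BF => false
  | BN f => negb (bev w f)
  | BAnd f g => bev w f && bev w g
  | BOr f g => bev w f || bev w g
  end.

Fixpoint bvars (f : bf) : list nat :=
  match f with
  | BA x _ => [x] | BT | BF => []
  | BN f => bvars f
  | BAnd f g | BOr f g => bvars f ++ bvars g
  end.

Fixpoint Vt (t : term) : list nat :=
  match t with
  | Var n => [n]
  | Meet s u | Join s u => Vt s ++ Vt u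
  | Neg s => Vt s
  | J2t _ | Zero | One => []
  end.

Fixpoint Dform (l : list nat) : bf :=
  match l with
  | [] => BT
  | x :: l => BAnd (BOr (BA x true) (BA x false)) (Dform l)
  end.

Fixpoint beta (t : term) : bf :=
  match t with
  | Var n => BA n true
  | Zero => BF | One => BT
  | Neg s => BN (beta s)
  | Join s u => BOr (beta s) (beta u)
  | Meet s u => BAnd (beta s) (beta u)
  | J2t s => BAnd (beta s) (Dform (Vt s))
  end.

Definition isH (a : wk) : bool := match a with Whalf => true | _ => false end.
Definition wu (u : nat -> wk) (x : nat) (s : bool) : bool :=
  match u x with W1 => s | W0 => negb s | Whalf => false end.
Definition b2w (b : bool) : wk := if b then W1 else W0.

Lemma half_prop u t x : In x (Vt t) -> u x = Whalf -> eval WKe u t = Whalf.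
Proof.
  intros Hx Hu. induction t; simpl in *.
  - destruct Hx as [<-|[]]. exact Hu.
  - apply in_app_or in Hx. destruct Hx as [Hx|Hx].
    + rewrite (IHt1 Hx). reflexivity.
    + rewrite (IHt2 Hx). destruct (eval WKe u t1); reflexivity.
  - apply in_app_or in Hx. destruct Hx as [Hx|Hx].
    + rewrite (IHt1 Hx). reflexivity.
    + rewrite (IHt2 Hx). destruct (eval WKe u t1); reflexivity.
  - rewrite (IHt Hx). reflexivity.
  - destruct Hx.
  - destruct Hx.
  - destruct Hx.
Qed.

Lemma Dform_bev w l : bev w (Dform l) = forallb (fun x => w x true || w x false) l.
Proof. induction l; simpl; [reflexivity|]. rewrite IHl. reflexivity. Qed.

Lemma wu_cl u x : (wu u x true || wu u x false) = negb (isH (u x)).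
Proof. unfold wu. destruct (u x); reflexivity. Qed.

Lemma class_prop u t : (forall x, In x (Vt t) -> u x <> Whalf) ->
  eval WKe u t = b2w (bev (wu u) (beta t)).
Proof.
  induction t; simpl; intro H.
  - specialize (H n (or_introl eq_refl)). unfold wu. destruct (u n); try reflexivity. congruence.
  - rewrite IHt1, IHt2 by (intros; apply H; apply in_or_app; auto).
    destruct (bev (wu u) (beta t1)), (bev (wu u) (beta t2)); reflexivity.
  - rewrite IHt1, IHt2 by (intros; apply H; apply in_or_app; auto).
    destruct (bev (wu u) (beta t1)), (bev (wu u) (beta t2)); reflexivity.
  - rewrite IHt by exact H. destruct (bev (wu u) (beta t)); reflexivity.
  - rewrite Dform_bev.
    destruct (forallb (fun x => wu u x true || wu u x false) (Vt t)) eqn:E.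
    + rewrite IHt. destruct (bev (wu u) (beta t)); reflexivity.
      intros x Hx. rewrite forallb_forall in E. specialize (E x Hx).
      rewrite wu_cl in E. destruct (u x); simpl in E; congruence.
    + rewrite Bool.andb_false_r. apply Bool.not_true_iff_false in E.
      destruct (existsb (fun x => isH (u x)) (Vt t)) eqn:E2.
      * apply existsb_exists in E2. destruct E2 as [x [Hx Hh]].
        rewrite (half_prop u t x Hx) by (destruct (u x); simpl in Hh; congruence).
        reflexivity.
      * exfalso. apply E. apply forallb_forall. intros x Hx. rewrite wu_cl.
        destruct (isH (u x)) eqn:E3; [|reflexivity].
        assert (existsb (fun x => isH (u x)) (Vt t) = true) by (apply existsb_exists; eauto).
        congruence.
  - reflexivity.
  - reflexivity.
Qed.

Lemma wk_incl s t : holds WKe s t -> incl (Vt s) (Vt t).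
Proof.
  intros Hst x Hx. destruct (in_dec Nat.eq_dec x (Vt t)) as [H|H]; [exact H|exfalso].
  set (u := fun y => if Nat.eqb y x then Whalf else W0).
  pose proof (Hst u) as E.
  rewrite (half_prop u s x Hx) in E by (unfold u; rewrite Nat.eqb_refl; reflexivity).
  rewrite class_prop in E.
  - destruct (bev (wu u) (beta t)); discriminate.
  - intros y Hy. unfold u. destruct (Nat.eqb y x) eqn:Ey; [|discriminate].
    apply Nat.eqb_eq in Ey; subst; contradiction.
Qed.

Lemma bev_ext w1 w2 f : (forall x s, w1 x s = w2 x s) -> bev w1 f = bev w2 f.
Proof. intro H. induction f; simpl; congruence. Qed.

Lemma sem_eq s t : holds WKe s t -> forall w', (forall x, w' x true && w' x false = false) ->
  bev w' (BAnd (beta s) (Dform (Vt s))) = bev w' (BAnd (beta t) (Dform (Vt t))).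
Proof.
  intros Hst w' Hc.
  set (u := fun x => if w' x true then W1 else if w' x false then W0 else Whalf).
  assert (Hw : forall x b, w' x b = wu u x b).
  { intros x b. specialize (Hc x). unfold wu, u.
    destruct (w' x true) eqn:E1, (w' x false) eqn:E2, b; simpl in *; congruence. }
  rewrite !(bev_ext w' (wu u)) by exact Hw. simpl. rewrite !Dform_bev.
  assert (Is : incl (Vt s) (Vt t)) by (apply wk_incl; exact Hst).
  assert (It : incl (Vt t) (Vt s)) by (apply wk_incl; intro; symmetry; apply Hst).
  destruct (forallb (fun x => wu u x true || wu u x false) (Vt s)) eqn:Es.
  - assert (Et : forallb (fun x => wu u x true || wu u x false) (Vt t) = true).
    { rewrite forallb_forall in *. intros x Hx. apply Es, It, Hx. }
    rewrite Et, !Bool.andb_true_r.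
    assert (Cs : forall x, In x (Vt s) -> u x <> Whalf).
    { intros x Hx. rewrite forallb_forall in Es. specialize (Es x Hx).
      rewrite wu_cl in Es. destruct (u x); simpl in Es; congruence. }
    assert (Ct : forall x, In x (Vt t) -> u x <> Whalf).
    { intros x Hx. rewrite forallb_forall in Et. specialize (Et x Hx).
      rewrite wu_cl in Et. destruct (u x); simpl in Et; congruence. }
    pose proof (Hst u) as E. rewrite (class_prop u s Cs), (class_prop u t Ct) in E.
    destruct (bev (wu u) (beta s)), (bev (wu u) (beta t)); simpl in E; congruence.
  - assert (Et : forallb (fun x => wu u x true || wu u x false) (Vt t) = false).
    { apply Bool.not_true_iff_false. intro Et. apply Bool.not_true_iff_false in Es. apply Es.
      rewrite forallb_forall in *. intros x Hx. apply Et, Is, Hx. }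
    rewrite Et, !Bool.andb_false_r. reflexivity.
Qed.

Section Alg.
Variable T : Type.
Variables (mt jn : T -> T -> T) (ng J2 : T -> T) (z0 o1 : T).
Hypothesis K1 : forall x, jn x x = x.
Hypothesis K2 : forall x y, jn x y = jn y x.
Hypothesis K3 : forall x y z, jn x (jn y z) = jn (jn x y) z.
Hypothesis K4 : forall x, ng (ng x) = x.
Hypothesis K5 : forall x y, mt x y = ng (jn (ng x) (ng y)).
Hypothesis K6 : forall x y, mt x (jn (ng x) y) = mt x y.
Hypothesis K7 : forall x, jn z0 x = x.
Hypothesis K8 : o1 = ng z0.
Hypothesis K9 : forall x, jn (J2 x) (ng (J2 x)) = o1.
Hypothesis K10 : forall x y, jn x (J2 y) = jn x (J2 (jn x y)).
Hypothesis K11 : forall x, mt x (J2 x) = x.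
Hypothesis K12 : forall x, J2 (mt x (ng x)) = z0.

Lemma ng_inj a b : ng a = ng b -> a = b.
Proof. intro H. rewrite <- (K4 a), <- (K4 b), H. reflexivity. Qed.
Lemma D1 x y : ng (jn x y) = mt (ng x) (ng y).
Proof. rewrite K5, !K4. reflexivity. Qed.
Lemma D2 x y : ng (mt x y) = jn (ng x) (ng y).
Proof. rewrite K5, K4. reflexivity. Qed.
Lemma M2 x y : mt x y = mt y x.
Proof. rewrite !K5, K2. reflexivity. Qed.
Lemma M1 x : mt x x = x.
Proof. rewrite K5, K1, K4. reflexivity. Qed.
Lemma M3 x y z : mt x (mt y z) = mt (mt x y) z.
Proof. rewrite !K5, !K4, K3. reflexivity. Qed.
Lemma JAC a b c : jn a (jn b c) = jn b (jn a c).
Proof. rewrite K3, (K2 a b), <- K3. reflexivity. Qed.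
Lemma MAC a b c : mt a (mt b c) = mt b (mt a c).
Proof. rewrite M3, (M2 a b), <- M3. reflexivity. Qed.
Lemma J0r x : jn x z0 = x.
Proof. rewrite K2; apply K7. Qed.
Lemma N1 : ng o1 = z0.
Proof. rewrite K8, K4. reflexivity. Qed.
Lemma M7 x : mt o1 x = x.
Proof. rewrite K5, N1, K7, K4. reflexivity. Qed.
Lemma M7r x : mt x o1 = x.
Proof. rewrite M2; apply M7. Qed.
Lemma D6 x y : jn x (mt (ng x) y) = jn x y.
Proof.
  apply ng_inj. rewrite !D1, D2, K4.
  rewrite <- (K4 x) at 2. rewrite K6. reflexivity.
Qed.
Lemma L1 x : jn x (ng x) = jn x o1.
Proof. rewrite <- (M7r (ng x)) at 1. rewrite D6. reflexivity. Qed.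
Lemma L1' x : mt x (ng x) = mt x z0.
Proof. rewrite <- (J0r (ng x)) at 1. rewrite K6. reflexivity. Qed.

Definition zz x := mt x z0.
Definition oo x := jn x o1.
Definition Bo b := jn b (ng b) = o1.

Lemma L2 x : jn x (zz x) = x.
Proof. unfold zz. rewrite <- L1', M2, D6, K1. reflexivity. Qed.
Lemma L2' x : mt x (oo x) = x.
Proof. unfold oo. rewrite <- L1, (K2 x (ng x)), K6, M1. reflexivity. Qed.
Lemma B1 b : Bo b -> jn b o1 = o1.
Proof. unfold Bo; intro H. rewrite <- L1. exact H. Qed.
Lemma B2 b : Bo b -> mt b z0 = z0.
Proof. unfold Bo; intro H. rewrite <- L1', K5, K4, K2, H, N1. reflexivity. Qed.
Lemma B2' b : Bo b -> mt b (ng b) = z0.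
Proof. intro H. rewrite L1'. apply B2; exact H. Qed.
Lemma Bo0 : Bo z0.
Proof. unfold Bo. rewrite K7, K8. reflexivity. Qed.
Lemma Bo1 : Bo o1.
Proof. unfold Bo. rewrite N1, J0r. reflexivity. Qed.
Lemma BoN b : Bo b -> Bo (ng b).
Proof. unfold Bo; intro H. rewrite K4, K2. exact H. Qed.
Lemma BoJ b c : Bo b -> Bo c -> Bo (jn b c).
Proof. intros Hb Hc. unfold Bo. rewrite L1, <- K3, (B1 c Hc), (B1 b Hb). reflexivity. Qed.
Lemma BoM b c : Bo b -> Bo c -> Bo (mt b c).
Proof. intros Hb Hc. rewrite K5. apply BoN, BoJ; apply BoN; assumption. Qed.
Lemma BoJ2 x : Bo (J2 x).
Proof. apply K9. Qed.

Lemma Z1 y : mt z0 (jn o1 y) = mt z0 y.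
Proof. rewrite K8. apply K6. Qed.
Lemma Z2 a : zz (ng a) = zz a.
Proof. unfold zz. rewrite <- !L1', K4, M2. reflexivity. Qed.
Lemma zzz a : zz (zz a) = zz a.
Proof. unfold zz. rewrite <- M3, M1. reflexivity. Qed.
Lemma Z3 x y : zz (jn x y) = mt (zz x) y.
Proof.
  unfold zz at 1. rewrite <- L1', D1.
  rewrite (M2 (ng x) (ng y)), M3, (M2 (jn x y) (ng y)), <- M3, (M2 (jn x y)).
  rewrite <- (K4 x) at 2. rewrite K6.
  rewrite MAC, (M2 (ng y) y), L1'. fold (zz y).
  rewrite <- (Z2 x). unfold zz. rewrite <- M3, (M2 z0 y). reflexivity.
Qed.
Lemma zzM x y : mt (zz x) y = mt (zz x) (zz y).
Proof. unfold zz. rewrite <- !M3, (MAC z0 y z0), M1, (M2 z0 y). reflexivity. Qed.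
Lemma ngzz a : ng (zz a) = oo (ng a).
Proof. unfold zz, oo. rewrite D2, <- K8. reflexivity. Qed.
Lemma zzx x : mt (zz x) x = zz x.
Proof. unfold zz. rewrite <- M3, (M2 z0 x), M3, M1. reflexivity. Qed.
Lemma Z4 x y : jn (zz x) (zz y) = zz (jn x y).
Proof.
  set (w := zz (jn x y)).
  assert (Hw : mt (ng (zz x)) (zz y) = w).
  { unfold w. rewrite Z3.
    change (mt (ng (zz x)) (mt y z0) = mt (zz x) y).
    rewrite (M2 y z0), M3. change (mt (zz (ng (zz x))) y = mt (zz x) y).
    rewrite Z2, zzz. reflexivity. }
  rewrite <- D6, Hw.
  assert (Hw2 : mt (ng w) (zz x) = w).
  { change (mt (ng w) (mt x z0) = w). rewrite (M2 x z0), M3.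
    change (mt (zz (ng w)) x = w). rewrite Z2.
    unfold w. rewrite zzz, Z3, <- M3, (M2 y x), M3, zzx. reflexivity. }
  rewrite K2, <- D6, Hw2, K1. reflexivity.
Qed.

Lemma J0 : J2 z0 = z0.
Proof. pose proof (K12 z0) as H. rewrite <- K8, M7r in H. exact H. Qed.
Lemma Jzz x : J2 (zz x) = z0.
Proof. unfold zz. rewrite <- L1'. apply K12. Qed.
Lemma J1 : J2 o1 = o1.
Proof. pose proof (K11 o1) as H. rewrite M7 in H. exact H. Qed.
Lemma L6 x : jn x (J2 x) = x.
Proof. pose proof (K10 x (zz x)) as H. rewrite Jzz, L2, J0r in H. symmetry; exact H. Qed.
Lemma E1 x : jn (J2 x) (zz x) = x.
Proof.
  assert (H : mt (ng (J2 x)) x = zz x).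
  { rewrite M2. transitivity (mt (mt x (J2 x)) (ng (J2 x))).
    - rewrite K11. reflexivity.
    - rewrite <- M3, (B2' _ (BoJ2 x)). reflexivity. }
  rewrite <- H, D6, K2. apply L6.
Qed.
Lemma D6' b y : jn (ng b) (mt b y) = jn (ng b) y.
Proof. pose proof (D6 (ng b) y) as H. rewrite K4 in H. exact H. Qed.
Lemma JB b x : mt b (J2 x) = mt b (J2 (mt x b)).
Proof.
  rewrite <- (K6 b (J2 x)), <- (K6 b (J2 (mt x b))), (K10 (ng b) x), (K10 (ng b) (mt x b)).
  rewrite (M2 x b), D6'. reflexivity.
Qed.
Lemma xnJn x : mt x (ng (J2 (ng x))) = x.
Proof.
  pose proof (L6 (ng x)) as H. apply (f_equal ng) in H. rewrite D1, !K4 in H. exact H.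
Qed.
Lemma xJn x : mt x (J2 (ng x)) = zz x.
Proof.
  transitivity (mt (mt x (ng (J2 (ng x)))) (J2 (ng x))).
  - rewrite xnJn. reflexivity.
  - rewrite <- M3, (M2 (ng _)), (B2' _ (BoJ2 _)). reflexivity.
Qed.
Lemma E7 x : mt (J2 x) (J2 (ng x)) = z0.
Proof.
  rewrite M2, JB, xJn, Jzz. apply B2, BoJ2.
Qed.
Lemma nL2 x : mt (ng x) (ng (zz x)) = ng x.
Proof. rewrite <- D1, L2. reflexivity. Qed.
Lemma E2 x a : ng (jn x (zz a)) = jn (ng x) (zz a).
Proof.
  set (e := jn x (zz a)). set (zt := zz (jn x a)).
  assert (H1 : zz (ng e) = zt).
  { unfold zt, e. rewrite Z2, !Z3. symmetry. apply zzM. }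
  assert (H2 : ng e = mt (ng zt) (ng x)).
  { unfold zt, e. rewrite <- Z4, !D1.
    rewrite (M2 (mt _ _) (ng x)), M3, nL2. reflexivity. }
  assert (H3 : jn zt (ng e) = jn zt (ng x)).
  { rewrite H2. apply D6. }
  transitivity (jn (J2 (ng e)) (zz (ng e))). { symmetry. apply E1. }
  rewrite H1, K2, K10, H3, <- K10.
  unfold zt. rewrite <- Z4, <- (Z2 x), (K2 _ (J2 (ng x))), K3, E1. reflexivity.
Qed.

Lemma ooN a : oo (ng a) = oo a.
Proof. rewrite <- ngzz, <- (Z2 a), ngzz, K4. reflexivity. Qed.
Lemma E8 x a : mt x (oo a) = jn x (zz a).
Proof.
  pose proof (E2 (ng x) a) as H. rewrite D1, K4, ngzz, ooN in H. exact H.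
Qed.
Lemma AbsJ x y : jn x (mt x y) = jn x (zz y).
Proof.
  rewrite <- D6, M3, (M2 (ng x) x), L1'. fold (zz x).
  rewrite <- Z3, <- Z4, K3, L2. reflexivity.
Qed.
Lemma BoAbs1 b c : Bo c -> jn b (mt b c) = b.
Proof. intro Hc. rewrite AbsJ. unfold zz. rewrite (B2 c Hc). apply J0r. Qed.
Lemma BoAbs2 b c : Bo c -> mt b (jn b c) = b.
Proof.
  intro Hc. apply ng_inj. rewrite D2, D1. apply BoAbs1, BoN, Hc.
Qed.
Lemma le1 u w : mt u (ng w) = z0 -> mt u w = u.
Proof.
  intro H. rewrite <- K6.
  assert (E : jn (ng u) w = o1). { rewrite <- (K4 w) at 1. rewrite <- D2, H. symmetry; exact K8. }
  rewrite E. apply M7r.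
Qed.
Lemma le2 u w : Bo u -> mt u w = u -> jn u w = w.
Proof.
  intros Hu H. rewrite <- H at 1. rewrite K2, M2. apply BoAbs1, Hu.
Qed.
Lemma distr b c d : Bo b -> Bo c -> Bo d ->
  mt b (jn c d) = jn (mt b c) (mt b d).
Proof.
  intros Hb Hc Hd.
  set (L := mt b (jn c d)). set (m := jn (mt b c) (mt b d)).
  assert (BL : Bo L) by (apply BoM; [|apply BoJ]; assumption).
  assert (Bm : Bo m) by (apply BoJ; apply BoM; assumption).
  assert (H1 : mt b (ng m) = mt (ng c) (mt b (ng d))).
  { unfold m. rewrite D1, !D2, M3, K6, (M2 b (ng c)), <- M3, K6. reflexivity. }
  assert (H2 : mt L (ng m) = z0).
  { unfold L. rewrite <- M3, MAC, H1.
    rewrite (MAC (ng c)), <- D1, MAC, (B2' _ (BoJ _ _ Hc Hd)). apply B2; assumption. }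
  assert (H3 : mt L m = L) by (apply le1; exact H2).
  assert (H4 : mt (mt b c) L = mt b c).
  { unfold L. rewrite <- M3, (MAC c b), M3, M1, BoAbs2 by assumption. reflexivity. }
  assert (H5 : mt (mt b d) L = mt b d).
  { unfold L. rewrite <- M3, (MAC d b), M3, M1, (K2 c d), BoAbs2 by assumption. reflexivity. }
  assert (H6 : jn m L = L).
  { unfold m. rewrite <- K3, (le2 _ _ (BoM _ _ Hb Hd) H5), (le2 _ _ (BoM _ _ Hb Hc) H4).
    reflexivity. }
  assert (H7 : mt m L = m).
  { rewrite <- H6. apply BoAbs2. exact BL. }
  rewrite <- H3, M2. exact H7.
Qed.
Lemma JM x b : Bo b -> J2 (mt x b) = mt (J2 x) b.
Proof.
  intro Hb.
  assert (H1 : mt (ng b) (J2 (mt x b)) = z0).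
  { rewrite JB, <- M3, (B2' _ Hb). fold (zz x). rewrite Jzz. apply B2, BoN, Hb. }
  assert (H2 : mt (J2 (mt x b)) b = J2 (mt x b)).
  { apply le1. rewrite M2. exact H1. }
  rewrite <- H2, M2, <- JB. apply M2.
Qed.
Definition CC a := J2 (oo a).
Lemma BoCC a : Bo (CC a).
Proof. apply BoJ2. Qed.
Lemma E4 b a : Bo b -> J2 (jn b (zz a)) = mt b (CC a).
Proof. intro Hb. rewrite <- E8, M2, JM by exact Hb. apply M2. Qed.
Lemma oo1z y : oo y = jn o1 (zz y).
Proof. rewrite <- E8. symmetry; apply M7. Qed.
Lemma zzoo x : zz (oo x) = zz x.
Proof. unfold oo. rewrite Z3. apply M7r. Qed.
Lemma ooJ x y : oo (jn x y) = mt (oo x) (oo y).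
Proof. rewrite E8. unfold oo at 2. rewrite <- K3, <- oo1z. unfold oo. symmetry; apply K3. Qed.
Lemma MAC4 a b c d : mt (mt a b) (mt c d) = mt (mt b d) (mt a c).
Proof. rewrite <- !M3, (MAC a b), (MAC d a), (M2 d c). reflexivity. Qed.
Lemma E5 x y : CC (jn x y) = mt (CC x) (CC y).
Proof.
  assert (H3 : oo (jn x y) = jn (mt (CC x) (CC y)) (zz (jn x y))).
  { rewrite <- E8, ooJ. unfold CC.
    transitivity (mt (mt (oo x) (J2 (oo x))) (mt (oo y) (J2 (oo y)))).
    { rewrite !K11. reflexivity. }
    apply MAC4. }
  assert (H4 : CC (jn x y) = mt (mt (CC x) (CC y)) (CC (jn x y))).
  { unfold CC at 1. rewrite H3, E4. reflexivity. apply BoM; apply BoCC. }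
  assert (H5 : mt (CC y) (CC x) = mt (CC (jn x y)) (CC x)).
  { pose proof (K10 (zz x) (oo y)) as H.
    assert (E : jn (zz x) (oo y) = oo (jn x y)).
    { rewrite oo1z, JAC, Z4, <- oo1z. reflexivity. }
    rewrite E in H. apply (f_equal J2) in H. fold (CC y) (CC (jn x y)) in H.
    rewrite !(K2 (zz x)), !E4 in H by apply BoCC. exact H. }
  rewrite H4, (M2 (CC x) (CC y)), <- M3, (M2 (CC x) (CC (jn x y))), <- H5, M3, M1.
  reflexivity.
Qed.
Lemma CC0 : CC z0 = o1.
Proof. unfold CC, oo. rewrite K7. apply J1. Qed.
Lemma CCN x : CC (ng x) = CC x.
Proof. unfold CC. rewrite ooN. reflexivity. Qed.
Lemma JleC x : J2 x = mt (CC x) (J2 x).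
Proof.
  assert (H : mt (oo x) (J2 x) = x).
  { rewrite M2, E8. apply E1. }
  transitivity (J2 (mt (oo x) (J2 x))).
  - rewrite H. reflexivity.
  - apply JM, BoJ2.
Qed.
Lemma E5' x : CC x = jn (J2 x) (J2 (ng x)).
Proof.
  set (P := J2 x). set (Q := J2 (ng x)).
  assert (BP : Bo P) by apply BoJ2. assert (BQ : Bo Q) by apply BoJ2.
  assert (H1 : CC x = mt (jn P Q) (CC x)).
  { unfold CC at 1. 
    assert (E : oo x = jn (jn P Q) (zz x)).
    { unfold oo. rewrite <- L1. rewrite <- (E1 x) at 1. rewrite <- (E1 (ng x)), Z2.
      unfold P, Q. rewrite <- !K3, (JAC (zz x)), K1. reflexivity. }
    rewrite E, E4. reflexivity. apply BoJ; assumption. }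
  assert (H2 : P = mt (CC x) P) by apply JleC.
  assert (H3 : Q = mt (CC x) Q) by (unfold Q; rewrite <- (CCN x); apply JleC).
  rewrite H1 at 1. rewrite M2. 
  rewrite (distr _ _ _ (BoCC x) BP BQ), <- H2, <- H3. reflexivity.
Qed.
Lemma E6 b a : Bo b -> jn b (zz a) = jn (mt b (CC a)) (zz a).
Proof.
  intro Hb. rewrite <- !E8, <- M3. unfold CC. rewrite (M2 (J2 _)), K11. reflexivity.
Qed.

Fixpoint bi (sg : nat -> bool -> T) (f : bf) : T :=
  match f with
  | BA x s => sg x s | BT => o1 | BF => z0
  | BN f => ng (bi sg f)
  | BAnd f g => mt (bi sg f) (bi sg g)
  | BOr f g => jn (bi sg f) (bi sg g)
  end.
Definition bconst (b : bool) := if b then o1 else z0.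

Lemma bi_Bo sg f : (forall x s, Bo (sg x s)) -> Bo (bi sg f).
Proof.
  intro H. induction f; simpl.
  - apply H. - apply Bo1. - apply Bo0. - apply BoN; assumption.
  - apply BoM; assumption. - apply BoJ; assumption.
Qed.
Lemma bconst_Bo b : Bo (bconst b).
Proof. destruct b; [apply Bo1|apply Bo0]. Qed.
Lemma bconst_and a b : mt (bconst a) (bconst b) = bconst (a && b).
Proof. destruct a, b; simpl; first [apply M1 | apply M7 | apply M7r]. Qed.
Lemma bi_const w f : bi (fun x s => bconst (w x s)) f = bconst (bev w f).
Proof.
  induction f; simpl; try reflexivity.
  - rewrite IHf. destruct (bev w f); simpl; [apply N1 | symmetry; apply K8].
  - rewrite IHf1, IHf2. apply bconst_and.
  - rewrite IHf1, IHf2. destruct (bev w f1), (bev w f2); simpl;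
      first [apply K1 | apply K7 | apply J0r].
Qed.
Lemma bi_ext sg sg' f : (forall x, In x (bvars f) -> forall s, sg x s = sg' x s) ->
  bi sg f = bi sg' f.
Proof.
  induction f; simpl; intro H; try reflexivity.
  - apply H. left; reflexivity.
  - rewrite IHf; auto.
  - rewrite IHf1, IHf2; auto; intros; apply H; apply in_or_app; auto.
  - rewrite IHf1, IHf2; auto; intros; apply H; apply in_or_app; auto.
Qed.
Lemma mtdist e X Y : mt e (mt X Y) = mt (mt e X) (mt e Y).
Proof. rewrite <- M3, (MAC X e Y), (M3 e e), M1. reflexivity. Qed.
Lemma negrestr e X : mt e (ng (mt e X)) = mt e (ng X).
Proof. rewrite D2. apply K6. Qed.
Lemma restrict e sg sg' f : Bo e -> (forall x s, Bo (sg x s)) -> (forall x s, Bo (sg' x s)) ->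
  (forall x s, mt e (sg x s) = mt e (sg' x s)) -> mt e (bi sg f) = mt e (bi sg' f).
Proof.
  intros He H1 H2 H. induction f; simpl; try reflexivity.
  - apply H.
  - rewrite <- negrestr, IHf, negrestr. reflexivity.
  - rewrite !(mtdist e), IHf1, IHf2. reflexivity.
  - rewrite !distr by (assumption || apply bi_Bo; assumption). rewrite IHf1, IHf2. reflexivity.
Qed.
Lemma split3 p q X : Bo p -> Bo q -> Bo X ->
  X = jn (mt p X) (jn (mt q X) (mt (mt (ng p) (ng q)) X)).
Proof.
  intros Hp Hq HX.
  assert (E : jn p (jn q (mt (ng p) (ng q))) = o1).
  { rewrite <- D1, K3. apply BoJ; assumption. }
  assert (Br : Bo (mt (ng p) (ng q))) by (apply BoM; apply BoN; assumption).
  rewrite !(M2 _ X), <- (distr X q _ HX Hq Br), <- (distr X p _ HX Hp (BoJ _ _ Hq Br)), E.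
  symmetry; apply M7r.
Qed.

Lemma complete (L : list nat) : forall sg w,
  (forall x s, Bo (sg x s)) ->
  (forall x, In x L -> mt (sg x true) (sg x false) = z0) ->
  (forall x s, ~ In x L -> sg x s = bconst (w x s)) ->
  forall f g,
  (forall w', (forall x s, ~ In x L -> w' x s = w x s) ->
              (forall x, In x L -> w' x true && w' x false = false) ->
              bev w' f = bev w' g) ->
  bi sg f = bi sg g.
Proof.
  induction L as [|x L IH]; intros sg w HB HC HO f g HS.
  - rewrite (bi_ext sg (fun x s => bconst (w x s)) f), (bi_ext sg (fun x s => bconst (w x s)) g)
      by (intros; apply HO; auto).
    rewrite !bi_const, HS; auto. intros ? [].
  - set (p := sg x true). set (q := sg x false).
    assert (Bp : Bo p) by apply HB. assert (Bq : Bo q) by apply HB.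
    assert (Hpq : mt p q = z0) by (apply HC; left; reflexivity).
    assert (GEN : forall pat : bool -> bool, pat true && pat false = false ->
      bi (fun y s => if Nat.eqb y x then bconst (pat s) else sg y s) f =
      bi (fun y s => if Nat.eqb y x then bconst (pat s) else sg y s) g).
    { intros pat Hpat.
      apply (IH _ (fun y s => if Nat.eqb y x then pat s else w y s)).
      - intros y s. destruct (Nat.eqb y x); [apply bconst_Bo | apply HB].
      - intros y Hy. destruct (Nat.eqb y x) eqn:E.
        + rewrite bconst_and, Hpat. reflexivity.
        + apply HC. right; exact Hy.
      - intros y s Hy. destruct (Nat.eqb y x) eqn:E; [reflexivity|].
        apply HO. intros [E'|E']; [subst; rewrite Nat.eqb_refl in E; discriminate|contradiction].
      - intros w' H1 H2. apply HS.
        + intros y s Hy. rewrite H1. 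
          * destruct (Nat.eqb y x) eqn:E; [|reflexivity].
            apply Nat.eqb_eq in E; subst; exfalso; apply Hy; left; reflexivity.
          * intro; apply Hy; right; assumption.
        + intros y [<-|Hy]; [|apply H2; exact Hy].
          destruct (in_dec Nat.eq_dec x L) as [Hi|Hi]; [apply H2; exact Hi|].
          rewrite !H1 by exact Hi. rewrite Nat.eqb_refl. exact Hpat. }
    assert (RES : forall (e : T) pat, Bo e ->
      mt e p = mt e (bconst (pat true)) -> mt e q = mt e (bconst (pat false)) ->
      forall h, mt e (bi sg h) =
        mt e (bi (fun y s => if Nat.eqb y x then bconst (pat s) else sg y s) h)).
    { intros e pat He E1' E2' h. apply restrict; auto.
      - intros y s; destruct (Nat.eqb y x); [apply bconst_Bo|apply HB].
      - intros y s. destruct (Nat.eqb y x) eqn:E; [|reflexivity].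
        apply Nat.eqb_eq in E; subst. destruct s; assumption. }
    set (r := mt (ng p) (ng q)).
    assert (Br : Bo r) by (apply BoM; apply BoN; assumption).
    assert (Rp : mt r p = z0).
    { unfold r. rewrite <- M3, (M2 (ng q)), M3, (M2 (ng p) p), (B2' _ Bp), M2. apply B2, BoN, Bq. }
    assert (Rq : mt r q = z0).
    { unfold r. rewrite <- M3, (M2 (ng q)), (B2' _ Bq). apply B2, BoN, Bp. }
    rewrite (split3 p q (bi sg f)), (split3 p q (bi sg g)); try assumption;
      try (apply bi_Bo; assumption).
    fold r.
    assert (S1a : mt p p = mt p (bconst true)) by (simpl; rewrite M1, M7r; reflexivity).
    assert (S1b : mt p q = mt p (bconst false)) by (simpl; rewrite Hpq; symmetry; apply B2; assumption).
    assert (S2a : mt q p = mt q (bconst false)) by (simpl; rewrite M2, Hpq; symmetry; apply B2; assumption).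
    assert (S2b : mt q q = mt q (bconst true)) by (simpl; rewrite M1, M7r; reflexivity).
    assert (S3a : mt r p = mt r (bconst false)) by (simpl; rewrite Rp; symmetry; apply B2; assumption).
    assert (S3b : mt r q = mt r (bconst false)) by (simpl; rewrite Rq; symmetry; apply B2; assumption).
    rewrite (RES p (fun s => s) Bp S1a S1b f), (RES p (fun s => s) Bp S1a S1b g).
    rewrite (RES q negb Bq S2a S2b f), (RES q negb Bq S2a S2b g).
    rewrite (RES r (fun _ => false) Br S3a S3b f), (RES r (fun _ => false) Br S3a S3b g).
    rewrite (GEN (fun s => s)), (GEN negb), (GEN (fun _ => false)); reflexivity.
Qed.

Fixpoint evT (v : nat -> T) (t : term) : T :=
  match t with
  | Var n => v n
  | Meet s u => mt (evT v s) (evT v u)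
  | Join s u => jn (evT v s) (evT v u)
  | Neg s => ng (evT v s)
  | J2t s => J2 (evT v s)
  | Zero => z0
  | One => o1
  end.
Definition jl (v : nat -> T) (l : list nat) : T := fold_right (fun x acc => jn (v x) acc) z0 l.
Definition sv (v : nat -> T) (x : nat) (s : bool) : T := if s then J2 (v x) else J2 (ng (v x)).

Lemma sv_Bo v x s : Bo (sv v x s).
Proof. destruct s; apply BoJ2. Qed.
Lemma jl_app v l1 l2 : jl v (l1 ++ l2) = jn (jl v l1) (jl v l2).
Proof.
  induction l1; simpl. - symmetry; apply K7. - rewrite IHl1. apply K3.
Qed.
Lemma CC_jl v l : CC (jl v l) = bi (sv v) (Dform l).
Proof.
  induction l; simpl. - apply CC0. - rewrite E5, IHl, E5'. reflexivity.
Qed.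
Lemma zz0 : zz z0 = z0.
Proof. apply M1. Qed.
Lemma JAC4 a b c d : jn (jn a b) (jn c d) = jn (jn a c) (jn b d).
Proof. rewrite <- !K3, (JAC b c d). reflexivity. Qed.

Lemma NF v t : evT v t = jn (bi (sv v) (beta t)) (zz (jl v (Vt t))).
Proof.
  induction t; simpl.
  - rewrite J0r. symmetry. apply E1.
  - rewrite K5, IHt1, IHt2, !E2, JAC4, jl_app, Z4, <- D2, <- E2, K4. reflexivity.
  - rewrite IHt1, IHt2, JAC4, jl_app, Z4. reflexivity.
  - rewrite IHt, E2. reflexivity.
  - rewrite IHt, E4 by (apply bi_Bo, sv_Bo). rewrite zz0, J0r, CC_jl. reflexivity.
  - rewrite zz0. symmetry; apply K1.
  - rewrite zz0. symmetry; apply J0r.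
Qed.

Lemma mem_jl v x l : In x l -> jn (v x) (jl v l) = jl v l.
Proof.
  induction l as [|y l IH]; simpl; intro H0; [destruct H0|destruct H0 as [<-|H]].
  - rewrite K3, K1. reflexivity.
  - rewrite JAC, IH by exact H. reflexivity.
Qed.
Lemma jl_incl v l1 l2 : incl l1 l2 -> jn (jl v l1) (jl v l2) = jl v l2.
Proof.
  induction l1 as [|x l1 IH]; simpl; intro H.
  - apply K7.
  - rewrite <- K3, IH, mem_jl. reflexivity.
    + apply H; left; reflexivity.
    + intros y Hy; apply H; right; exact Hy.
Qed.
Lemma jl_eq v l1 l2 : incl l1 l2 -> incl l2 l1 -> jl v l1 = jl v l2.
Proof.
  intros H1 H2. rewrite <- (jl_incl v l2 l1 H2), K2. apply jl_incl, H1.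
Qed.

Lemma main_sec s t : holds WKe s t -> forall v, evT v s = evT v t.
Proof.
  intros Hst v. rewrite !NF.
  assert (Ea : jl v (Vt s) = jl v (Vt t)).
  { apply jl_eq; apply wk_incl; [exact Hst|]. intro; symmetry; apply Hst. }
  rewrite <- Ea.
  rewrite (E6 (bi (sv v) (beta s))), (E6 (bi (sv v) (beta t))) by (apply bi_Bo, sv_Bo).
  f_equal.
  set (f := BAnd (beta s) (Dform (Vt s))). set (g := BAnd (beta t) (Dform (Vt t))).
  assert (Ef : mt (bi (sv v) (beta s)) (CC (jl v (Vt s))) = bi (sv v) f).
  { unfold f; simpl. rewrite CC_jl. reflexivity. }
  assert (Eg : mt (bi (sv v) (beta t)) (CC (jl v (Vt s))) = bi (sv v) g).
  { unfold g; simpl. rewrite Ea, CC_jl. reflexivity. }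
  rewrite Ef, Eg.
  set (L := bvars f ++ bvars g).
  set (sg := fun x b => if in_dec Nat.eq_dec x L then sv v x b else bconst false).
  rewrite (bi_ext (sv v) sg f), (bi_ext (sv v) sg g).
  - apply (complete L sg (fun _ _ => false)).
    + intros x b. unfold sg. destruct (in_dec Nat.eq_dec x L); [apply sv_Bo|apply bconst_Bo].
    + intros x Hx. unfold sg. destruct (in_dec Nat.eq_dec x L); [|contradiction]. apply E7.
    + intros x b Hx. unfold sg. destruct (in_dec Nat.eq_dec x L); [contradiction|reflexivity].
    + intros w' H1 H2. apply sem_eq; [exact Hst|]. intro x.
      destruct (in_dec Nat.eq_dec x L) as [Hi|Hi]; [apply H2, Hi|]. rewrite !H1 by exact Hi.
      reflexivity.
  - intros x Hx b. unfold sg. destruct (in_dec Nat.eq_dec x L) as [|Hn]; [reflexivity|].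
    exfalso; apply Hn. unfold L; apply in_or_app; right; exact Hx.
  - intros x Hx b. unfold sg. destruct (in_dec Nat.eq_dec x L) as [|Hn]; [reflexivity|].
    exfalso; apply Hn. unfold L; apply in_or_app; left; exact Hx.
Qed.
End Alg.

Lemma eval_evT (A : algebra) v t :
  eval A v t = evT (carrier A) (a_meet A) (a_join A) (a_neg A) (a_J2 A) (a_zero A) (a_one A) v t.
Proof. induction t; simpl; congruence. Qed.

Definition val3 {X : Type} (a b c : X) (n : nat) : X :=
  match n with 0 => a | 1 => b | _ => c end.

Theorem theorem4p5 :
  forall A : algebra, models_K A <-> in_variety_WKe A.
Proof.
  intro A. split.
  - intros HK s t Hst v.
    pose proof (fun e (H : In e K_axioms) x y z => HK e H (val3 x y z)) as HK'.
    assert (K1 : forall x, a_join A x x = x)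
      by (intro x; exact (HK' (Join vx vx, vx) ltac:(cbn; tauto) x x x)).
    assert (K2 : forall x y, a_join A x y = a_join A y x)
      by (intros x y; exact (HK' (Join vx vy, Join vy vx) ltac:(cbn; tauto) x y x)).
    assert (K3 : forall x y z, a_join A x (a_join A y z) = a_join A (a_join A x y) z)
      by (intros x y z; exact (HK' (Join vx (Join vy vz), Join (Join vx vy) vz) ltac:(cbn; tauto) x y z)).
    assert (K4 : forall x, a_neg A (a_neg A x) = x)
      by (intro x; exact (HK' (Neg (Neg vx), vx) ltac:(cbn; tauto) x x x)).
    assert (K5 : forall x y, a_meet A x y = a_neg A (a_join A (a_neg A x) (a_neg A y)))
      by (intros x y; exact (HK' (Meet vx vy, Neg (Join (Neg vx) (Neg vy))) ltac:(cbn; tauto) x y x)).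
    assert (K6 : forall x y, a_meet A x (a_join A (a_neg A x) y) = a_meet A x y)
      by (intros x y; exact (HK' (Meet vx (Join (Neg vx) vy), Meet vx vy) ltac:(cbn; tauto) x y x)).
    assert (K7 : forall x, a_join A (a_zero A) x = x)
      by (intro x; exact (HK' (Join Zero vx, vx) ltac:(cbn; tauto) x x x)).
    assert (K8 : a_one A = a_neg A (a_zero A))
      by (exact (HK' (One, Neg Zero) ltac:(cbn; tauto) (a_zero A) (a_zero A) (a_zero A))).
    assert (K9 : forall x, a_join A (a_J2 A x) (a_neg A (a_J2 A x)) = a_one A)
      by (intro x; exact (HK' (Join (J2t vx) (Neg (J2t vx)), One) ltac:(cbn; tauto) x x x)).
    assert (K10 : forall x y, a_join A x (a_J2 A y) = a_join A x (a_J2 A (a_join A x y)))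
      by (intros x y; exact (HK' (Join vx (J2t vy), Join vx (J2t (Join vx vy))) ltac:(cbn; tauto) x y x)).
    assert (K11 : forall x, a_meet A x (a_J2 A x) = x)
      by (intro x; exact (HK' (Meet vx (J2t vx), vx) ltac:(cbn; tauto) x x x)).
    assert (K12 : forall x, a_J2 A (a_meet A x (a_neg A x)) = a_zero A)
      by (intro x; exact (HK' (J2t (Meet vx (Neg vx)), Zero) ltac:(cbn; tauto) x x x)).
    rewrite !eval_evT. eapply main_sec; eassumption.
  - intros Hv e He. apply Hv.
    cbn in He.
    repeat (destruct He as [He|He];
      [subst e; intro v; cbn; destruct (v 0), (v 1), (v 2); reflexivity|]).
    destruct He.
Qed.
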